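(* Let $F,G$ be finitely supported sequences on $\mathbb{Z}$ with values in $\mathbb{D}$, with $\operatorname{supp}F\subset(-\infty,N_1]$, $\operatorname{supp}G\subset[-N_2,\infty)$, and let $N>N_1+N_2$. Then for every $M\geqslant -N_2$: $$\mathfrak{a}^{( * )}(z,F+(G^{\leqslant M})_{\to N})=\mathfrak{a}^{( * )}(z,F)\mathfrak{a}^{( * )}(z,G^{\leqslant M})+z^N\mathfrak{b}^{( * )}(z,F)\mathfrak{b}(z,G^{\leqslant M}),$$ $$\mathfrak{b}(z,F+(G^{\leqslant M})_{\to N})=z^N\mathfrak{b}(z,G^{\leqslant M})\mathfrak{a}(z,F)+\mathfrak{b}(z,F)\mathfrak{a}^{( * )}(z,G^{\leqslant M}),$$ and, for $z\in\mathbb{T}$, $$|\mathfrak{r}(z,F+(G^{\leqslant M})_{\to N})-\mathfrak{r}(z,F)|\leqslant\frac{|\mathfrak{r}(z,G^{\leqslant M})|}{1-|\mathfrak{r}(z,G^{\leqslant M})|}.$$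
   Context: $\mathbb{T}$, $\mathbb{D}$ denote the unit circle and open unit disc. For a sequence $H$ on $\mathbb{Z}$ and $M,N\in\mathbb{Z}$: $(H_{\to N})_n=H_{n-N}$ and $H^{\leqslant M}=H\chi_{n\leqslant M}$. For a finitely supported sequence $G$ with values in $\mathbb{D}$: let $\widetilde X_n(z)=I$ for $n$ below the support and $\widetilde X_n=(1-|G_n|^2)^{-1/2}\begin{pmatrix}1&\overline{G_n}z^{-n}\\ G_nz^n&1\end{pmatrix}\widetilde X_{n-1}$; for $n$ above the support $\widetilde X_n=\begin{pmatrix}\mathfrak{a}(z,G)&\mathfrak{b}^{( * )}(z,G)\\ \mathfrak{b}(z,G)&\mathfrak{a}^{( * )}(z,G)\end{pmatrix}$, where $f^{( * )}(z)=\overline{f(\bar z^{-1})}$. Also $\mathfrak{r}(z,G)=\mathfrak{b}(z,G)/\mathfrak{a}^{( * )}(z,G)$. *)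

(* Defs.v *)
From HB Require Import structures.
From mathcomp Require Import all_boot all_order all_algebra.
From mathcomp Require Import classical_sets reals.
From mathcomp Require Import complex.
Set Implicit Arguments. Unset Strict Implicit. Unset Printing Implicit Defensive.
Import Order.TTheory GRing.Theory Num.Theory.
Local Open Scope ring_scope.

Section Nlft.
Variable R : realType.
Local Notation C := R[i].

Definition disc_fin_seq (G : int -> C) : Prop :=
  (forall n, `|G n| < 1) /\ exists K : nat, forall n : int, (K < `|n|)%N -> G n = 0.

Definition step (G : int -> C) (n : int) (z : C) : 'M[C]_2 :=
  (sqrtC (1 - `|G n| ^+ 2))^-1 *:
    \matrix_(i < 2, j < 2)
      (if i == j then 1
       else if i == 0 then (G n)^* * z ^ (- n) else G n * z ^ n).

(* X = step_{L+len-1} * ... * step_{L+1} * step_L *)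
Definition transfer (G : int -> C) (L : int) (len : nat) (z : C) : 'M[C]_2 :=
  \prod_(k <- rev (iota 0 len)) step G (L + k%:Z) z.

(* some K with G n = 0 for |n| > K (chosen classically; 0 if none) *)
Definition supp_bound (G : int -> C) : nat :=
  xget 0%N [set K : nat | forall n : int, (K < `|n|)%N -> G n = 0].

(* the transfer matrix above the support: [[a, b^star], [b, a^star]] *)
Definition Xfin (G : int -> C) (z : C) : 'M[C]_2 :=
  transfer G (- (supp_bound G)%:Z) (2 * supp_bound G).+1 z.

Definition nlft_a (G : int -> C) (z : C) : C := Xfin G z 0 0.
Definition nlft_b (G : int -> C) (z : C) : C := Xfin G z 1 0.

Definition fstar (f : C -> C) (z : C) : C := (f ((z^*)^-1))^*.

Definition nlft_r (G : int -> C) (z : C) : C := nlft_b G z / fstar (nlft_a G) z.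

Definition shiftseq (H : int -> C) (N : int) : int -> C := fun n => H (n - N).
Definition truncseq (H : int -> C) (M : int) : int -> C :=
  fun n => if n <= M then H n else 0.

End Nlft.

(* Main.v *)
Require Import Defs.
From HB Require Import structures.
From mathcomp Require Import all_boot all_order all_algebra.
From mathcomp Require Import classical_sets reals.
From mathcomp Require Import complex.
From mathcomp Require Import zify ring lra.
Import Order.TTheory GRing.Theory Num.Theory.
Set Implicit Arguments. Unset Strict Implicit. Unset Printing Implicit Defensive.
Local Open Scope ring_scope.

Section Aux.
Variable R : realType.
Local Notation C := R[i].

Lemma mul22 (A B : 'M[C]_2) i j : (A * B) i j = A i 0 * B 0 j + A i 1 * B 1 j.
Proof. rewrite !mxE. rewrite big_ord_recr /=. rewrite big_ord_recr /= big_ord0 add0r.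
have -> : widen_ord (leqnSn 1) ord_max = 0 :> 'I_2 by apply/val_inj.
by have -> : ord_max = 1 :> 'I_2 by apply/val_inj.
Qed.

Lemma transferS (G : int -> C) L n z :
  transfer G L n.+1 z = step G (L + n%:Z) z * transfer G L n z.
Proof. by rewrite /transfer -[n.+1]addn1 iotaD rev_cat /= big_cons add0n. Qed.

Lemma transfer0 (G : int -> C) L z : transfer G L 0 z = 1.
Proof. by rewrite /transfer big_nil. Qed.

Lemma transfer_split (G : int -> C) L m n z :
  transfer G L (m + n) z = transfer G (L + m%:Z) n z * transfer G L m z.
Proof.
elim: n => [|n IH]; first by rewrite addn0 transfer0 mul1r.
by rewrite addnS !transferS IH mulrA PoszD addrA.
Qed.

Lemma transfer_ext (G G' : int -> C) L n z :
  (forall k, (k < n)%N -> G (L + k%:Z) = G' (L + k%:Z)) ->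
  transfer G L n z = transfer G' L n z.
Proof.
move=> h; rewrite /transfer; apply: eq_big_seq => k.
rewrite mem_rev mem_iota add0n => /andP[_ hk].
by rewrite /step h.
Qed.

Lemma step0 (G : int -> C) n z : G n = 0 -> step G n z = 1.
Proof.
move=> h; rewrite /step h normr0 expr0n /= subr0 sqrtC1 invr1 scale1r.
apply/matrixP => i j; rewrite !mxE.
case: i => [[|[|//]] ?]; case: j => [[|[|//]] ?] /=;
  by rewrite ?conjC0 ?mul0r.
Qed.

Lemma transfer_id (G : int -> C) L n z :
  (forall k, (k < n)%N -> G (L + k%:Z) = 0) -> transfer G L n z = 1.
Proof.
move=> h; rewrite /transfer; apply: big1_seq => k.
rewrite mem_rev mem_iota add0n => /andP[_ hk].
by rewrite step0 // h.
Qed.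


Lemma transfer_widen (G : int -> C) (L : int) len (L' : int) len' z :
  L' <= L -> L + len%:Z <= L' + len'%:Z ->
  (forall n, n < L \/ L + len%:Z <= n -> G n = 0) ->
  transfer G L' len' z = transfer G L len z.
Proof.
move=> h1 h2 h0.
have [a ea] : exists a : nat, a%:Z = L - L'.
  by exists (absz (L - L')%R); rewrite gez0_abs // subr_ge0.
have [b eb] : exists b : nat, b%:Z = L' + len'%:Z - (L + len%:Z).
  by exists (absz (L' + len'%:Z - (L + len%:Z))%R); rewrite gez0_abs // subr_ge0.
have el : len' = (a + len + b)%N by lia.
have eL : L' + a%:Z = L by lia.
rewrite el !transfer_split eL.
rewrite PoszD addrA eL. rewrite (@transfer_id G (L + len%:Z)); last first.
  by move=> k _; apply: h0; right; lia.
rewrite (@transfer_id G L'); last first.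
  by move=> k hk; apply: h0; left; lia.
by rewrite mul1r mulr1.
Qed.

Lemma supp_boundP (G : int -> C) :
  (exists K : nat, forall n : int, (K < `|n|)%N -> G n = 0) ->
  forall n : int, (supp_bound G < `|n|)%N -> G n = 0.
Proof. by move=> h; apply: (xgetPex 0%N h). Qed.

Lemma Xfin_cover (G : int -> C) (K : nat) (L : int) len z :
  (forall n : int, (K < `|n|)%N -> G n = 0) ->
  L <= - K%:Z -> K%:Z < L + len%:Z ->
  Xfin G z = transfer G L len z.
Proof.
move=> hK h1 h2.
have hK0 := supp_boundP (ex_intro (fun K => forall n : int, (K < `|n|)%N -> G n = 0) K hK).
set K0 := supp_bound G in hK0 *.
set B : nat := (K0 + K + absz L + absz (L + len%:Z)%R)%N.
rewrite /Xfin -/K0.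
rewrite -(@transfer_widen G (- K0%:Z) (2 * K0).+1 (- B%:Z) (2 * B).+1); first last.
- by move=> n hn; apply: hK0; lia.
- lia.
- lia.
rewrite -(@transfer_widen G L len (- B%:Z) (2 * B).+1) //.
- lia.
- lia.
- by move=> n hn; apply: hK; lia.
Qed.


Definition Dm (w : C) : 'M[C]_2 :=
  \matrix_(i < 2, j < 2) (if i == j then (if i == 0 then 1 else w) else 0).

Lemma stepE (G : int -> C) n z i j : step G n z i j =
  (sqrtC (1 - `|G n| ^+ 2))^-1 *
  (if i == j then 1 else if i == 0 then (G n)^* * z ^ (- n) else G n * z ^ n).
Proof. by rewrite /step !mxE. Qed.

Lemma DmM (z : C) (N : int) : z != 0 -> Dm (z ^ N) * Dm (z ^ (- N)) = 1.
Proof.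
move=> z0; apply/matrixP => i j; rewrite mul22 !mxE.
case: i => [[|[|//]] ?]; case: j => [[|[|//]] ?] /=;
  rewrite ?mul0r ?mulr0 ?add0r ?addr0 ?mul1r ?mulr1 //.
by rewrite -expfzDr // subrr expr0z.
Qed.

Lemma step_shift (G : int -> C) (N n : int) z : z != 0 ->
  step (shiftseq G N) n z = Dm (z ^ N) * step G (n - N) z * Dm (z ^ (- N)).
Proof.
move=> z0; apply/matrixP => i j; rewrite !mul22 !stepE !mxE /shiftseq.
case: i => [[|[|//]] ?]; case: j => [[|[|//]] ?] /=;
  rewrite ?mul0r ?mulr0 ?add0r ?addr0 ?mul1r ?mulr1 //.
- by rewrite -!mulrA -expfzDr // opprB addrAC subrr add0r.
- by rewrite [RHS]mulrCA [X in _ = _ * X]mulrCA -expfzDr // [N + _]addrC subrK.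
- by rewrite mulrAC -expfzDr // subrr expr0z mul1r.
Qed.

Lemma transfer_shift (G : int -> C) (N L : int) len z : z != 0 ->
  transfer (shiftseq G N) L len z =
  Dm (z ^ N) * transfer G (L - N) len z * Dm (z ^ (- N)).
Proof.
move=> z0; elim: len => [|n IH].
  by rewrite !transfer0 mulr1 DmM.
rewrite !transferS IH step_shift //.
have -> : L + n%:Z - N = L - N + n%:Z by rewrite addrAC.
have e : Dm (z ^ (- N)) * Dm (z ^ N) = 1.
  by rewrite -{2}(opprK N) DmM.
by rewrite -!mulrA; congr (_ * _); congr (_ * _); rewrite !mulrA e mul1r.
Qed.


End Aux.

Section Aux2.
Variable R : realType.
Local Notation C := R[i].
Definition starsym (M : C -> 'M[C]_2) := forall z,
  M z 1 1 = (M ((z^*)^-1) 0 0)^* /\ M z 0 1 = (M ((z^*)^-1) 1 0)^*.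

Lemma inv_conj_inv (z : C) : (((z^*)^-1)^*)^-1 = z.
Proof. by rewrite fmorphV invrK; apply: conjCK. Qed.

Lemma starsym_mul M1 M2 : starsym M1 -> starsym M2 ->
  starsym (fun z => M1 z * M2 z).
Proof.
move=> h1 h2 z.
have [a1 b1] := h1 z; have [a2 b2] := h2 z.
have [c1 d1] := h1 ((z^*)^-1); have [c2 d2] := h2 ((z^*)^-1).
rewrite inv_conj_inv in c1 d1 c2 d2.
rewrite !mul22 !rmorphD !rmorphM.
have e1 : M1 z 1 0 = (M1 ((z^*)^-1) 0 1)^* by rewrite d1 conjCK.
have e2 : M1 z 0 0 = (M1 ((z^*)^-1) 1 1)^* by rewrite c1 conjCK.
by rewrite a1 a2 b1 b2 e1 e2; split; rewrite addrC.
Qed.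

Lemma c_real (g : C) : `|g| < 1 ->
  ((sqrtC (1 - `|g| ^+ 2))^-1)^* = (sqrtC (1 - `|g| ^+ 2))^-1.
Proof.
move=> hg; apply/eqP; rewrite -CrealE; apply: ger0_real.
rewrite invr_ge0 sqrtC_ge0 subr_ge0.
by apply: exprn_ile1 => //; apply: ltW.
Qed.

Lemma o10 : ((1 : 'I_2) == 0) = false. Proof. by []. Qed.
Lemma o01 : ((0 : 'I_2) == 1) = false. Proof. by []. Qed.

Lemma cjM (x y : C) : (x * y)^* = x^* * y^*. Proof. exact: rmorphM. Qed.
Lemma cjD (x y : C) : (x + y)^* = x^* + y^*. Proof. exact: rmorphD. Qed.
Lemma cjB (x y : C) : (x - y)^* = x^* - y^*. Proof. exact: rmorphB. Qed.
Lemma cj1 : (1 : C)^* = 1. Proof. exact: rmorph1. Qed.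
Lemma cj0 : (0 : C)^* = 0. Proof. exact: rmorph0. Qed.
Lemma cjV (x : C) : (x^-1)^* = (x^*)^-1. Proof. exact: fmorphV. Qed.
Lemma cjXz (x : C) (n : int) : (x ^ n)^* = (x^*) ^ n. Proof. exact: fmorphXz. Qed.

Lemma step_star (G : int -> C) n : `|G n| < 1 -> starsym (step G n).
Proof.
move=> hg z; split.
  by rewrite [LHS]stepE [in RHS]stepE !eqxx cjM c_real // cj1.
rewrite [LHS]stepE [in RHS]stepE o01 o10 /=.
rewrite cjM c_real //; congr (_ * _).
rewrite cjM; congr (_ * _).
by rewrite cjXz cjV conjCK exprz_inv.
Qed.

Lemma transfer_star (G : int -> C) L len : (forall n, `|G n| < 1) ->
  starsym (transfer G L len).
Proof.
move=> hG; elim: len => [|n IH].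
  by move=> z; rewrite !transfer0 !mxE !eqxx o01 o10 /= cj1 cj0.
have -> : transfer G L n.+1 = fun z => step G (L + n%:Z) z * transfer G L n z.
  by apply: boolp.funext => z; rewrite transferS.
by apply: starsym_mul => //; apply: step_star.
Qed.

Definition d22 (A : 'M[C]_2) := A 0 0 * A 1 1 - A 0 1 * A 1 0.

Lemma d22M A B : d22 (A * B) = d22 A * d22 B.
Proof. rewrite /d22 !mul22; ring. Qed.

Lemma step_det (G : int -> C) n z : `|G n| < 1 -> z != 0 -> d22 (step G n z) = 1.
Proof.
move=> hg z0; rewrite /d22 !stepE !eqxx o01 o10 /=.
set x := 1 - `|G n| ^+ 2.
set c := (sqrtC x)^-1.
have x0 : x != 0.
  by rewrite /x subr_eq0 eq_sym lt_eqF // exprn_ilt1.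
have hc : c * c * x = 1.
  by rewrite /c -expr2 exprVn sqrtCK mulVf.
have huv : z ^ (- n) * z ^ n = 1 by rewrite -expfzDr // addNr expr0z.
transitivity (c * c * (1 - (G n) * (G n)^* * (z ^ (- n) * z ^ n))); first by ring.
by rewrite huv mulr1 -normCK.
Qed.

Lemma transfer_det (G : int -> C) L len z : (forall n, `|G n| < 1) -> z != 0 ->
  d22 (transfer G L len z) = 1.
Proof.
move=> hG z0; elim: len => [|n IH].
  by rewrite transfer0 /d22 !mxE !eqxx o01 o10 /= mulr1 mulr0 subr0.
by rewrite transferS d22M IH step_det // mulr1.
Qed.
End Aux2.

Section Key.
Variable R : realType.
Local Notation C := R[i].

Lemma fr (X D b c : C) : D != 0 -> c != 0 ->
  X / D - b / c = (X * c - b * D) / (c * D).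
Proof. by move=> D0 c0; field; rewrite D0 c0. Qed.

Lemma fr2 (g A : C) : A != 0 -> A - g != 0 -> g / A / (1 - g / A) = g / (A - g).
Proof.
move=> A0 Ag0.
have -> : 1 - g / A = (A - g) / A by field.
by field; rewrite A0 Ag0.
Qed.

Lemma key (aF bF aG bG w : C) : `|w| = 1 ->
  aF * aF^* = 1 + bF * bF^* -> aG * aG^* = 1 + bG * bG^* ->
  `|(w * bG * aF + bF * aG^*) / (aF^* * aG^* + w * bF^* * bG) - bF / aF^*|
  <= `|bG / aG^*| / (1 - `|bG / aG^*|).
Proof.
move=> hw hF hG.
have hp : `|aF| ^+ 2 = 1 + `|bF| ^+ 2 by rewrite !normCK.
have hA : `|aG| ^+ 2 = 1 + `|bG| ^+ 2 by rewrite !normCK.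
set p := `|aF| in hp *; set q := `|bF| in hp *.
set A := `|aG| in hA *; set g := `|bG| in hA *.
have p0 : 0 <= p by apply: normr_ge0.
have q0 : 0 <= q by apply: normr_ge0.
have A0 : 0 <= A by apply: normr_ge0.
have g0 : 0 <= g by apply: normr_ge0.
have hpq : q < p.
  by rewrite -(@ltr_sqr _ q p) ?nnegrE // hp ltrDr ltr01.
have hAg : g < A.
  by rewrite -(@ltr_sqr _ g A) ?nnegrE // hA ltrDr ltr01.
have pp : 0 < p by apply: le_lt_trans hpq.
have Ap : 0 < A by apply: le_lt_trans hAg.
set Den := aF^* * aG^* + w * bF^* * bG.
have hD : p * A - q * g <= `|Den|.
  have := lerB_normD (aF^* * aG^*) (w * bF^* * bG).
  by rewrite !normrM !norm_conjC hw mul1r.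
have hpos : 0 < p * A - q * g.
  have -> : p * A - q * g = p * (A - g) + g * (p - q) by ring.
  apply: (@lt_le_trans _ _ (p * (A - g))).
    by apply: mulr_gt0 => //; rewrite subr_gt0.
  by rewrite lerDl; apply: mulr_ge0 => //; rewrite subr_ge0 ltW.
have Den0 : Den != 0.
  by rewrite -normr_gt0; apply: lt_le_trans hD.
have aF0 : aF^* != 0.
  by rewrite -normr_gt0 norm_conjC.
have aG0 : aG^* != 0.
  by rewrite -normr_gt0 norm_conjC.
have e1 : aF * aF^* - bF * bF^* = 1 by rewrite hF; ring.
rewrite fr //.
have -> : (w * bG * aF + bF * aG^*) * aF^* - bF * Den = w * bG by rewrite /Den -[RHS]mulr1 -e1; ring.
rewrite !normrM !normfV !normrM !norm_conjC hw mul1r -/p -/A -/g.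
have Dp : 0 < `|Den| by apply: lt_le_trans hD.
rewrite fr2; last 2 first.
- by rewrite gt_eqF.
- by rewrite subr_eq0 gt_eqF.
rewrite ler_wpM2l // lef_pV2 ?posrE ?subr_gt0 ?mulr_gt0 //.
apply: (le_trans _ (ler_wpM2l p0 hD)).
rewrite -subr_ge0.
have -> : p * (p * A - q * g) - (A - g)
   = q ^+ 2 * (A - g) + g * p * (p - q) + (A - g) * (p ^+ 2 - (1 + q ^+ 2)) by ring.
rewrite hp subrr mulr0 addr0.
apply: addr_ge0; apply: mulr_ge0.
- exact: exprn_ge0.
- by rewrite subr_ge0 ltW.
- exact: mulr_ge0.
- by rewrite subr_ge0 ltW.
Qed.
End Key.

Lemma ord2 (i : 'I_2) : i = 0 \/ i = 1.
Proof. by case: i => [[|[|//]] ?]; [left|right]; apply: val_inj. Qed.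

Lemma Dconj (R : realType) (w w' : R[i]) (X : 'M[R[i]]_2) :
  Dm w * X * Dm w' = \matrix_(i < 2, j < 2)
     ((if i == 0 then 1 else w) * X i j * (if j == 0 then 1 else w')).
Proof.
apply/matrixP => i j; rewrite !mul22 !mxE.
case: (ord2 i) => ->; case: (ord2 j) => ->; rewrite !eqxx ?o01 ?o10 /=;
  by rewrite ?mul0r ?mulr0 ?add0r ?addr0 ?mul1r ?mulr1.
Qed.

Lemma Xfin_star (R : realType) (G : int -> R[i]) : (forall n, `|G n| < 1) ->
  forall z, Xfin G z 1 1 = fstar (nlft_a G) z /\ Xfin G z 0 1 = fstar (nlft_b G) z.
Proof. by move=> h z; exact: (transfer_star _ _ h z). Qed.

Lemma Xfin_det (R : realType) (G : int -> R[i]) z : (forall n, `|G n| < 1) -> z != 0 ->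
  d22 (Xfin G z) = 1.
Proof. by move=> h z0; exact: (transfer_det _ _ h z0). Qed.

Unset Implicit Arguments. Set Strict Implicit. Set Printing Implicit Defensive.

Theorem lemma2p1 (R : realType) (F G : int -> R[i]) (N1 N2 N M : int)
  (hF : disc_fin_seq F) (hG : disc_fin_seq G)
  (suppF : forall n : int, N1 < n -> F n = 0)
  (suppG : forall n : int, n < - N2 -> G n = 0)
  (hN : N1 + N2 < N) (hM : - N2 <= M) :
  let GM := truncseq G M in
  let H := fun n : int => F n + shiftseq GM N n in
  (forall z : R[i], z != 0 ->
     fstar (nlft_a H) z
     = fstar (nlft_a F) z * fstar (nlft_a GM) z
       + z ^ N * fstar (nlft_b F) z * nlft_b GM z) /\
  (forall z : R[i], z != 0 ->
     nlft_b H z = z ^ N * nlft_b GM z * nlft_a F z + nlft_b F z * fstar (nlft_a GM) z) /\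
  (forall z : R[i], `|z| = 1 ->
     `|nlft_r H z - nlft_r F z| <= `|nlft_r GM z| / (1 - `|nlft_r GM z|)).
Proof.
move=> GM H.
case: hF => hF1 [KF hKF]; case: hG => hG1 [KG hKG].
have GMz : forall n, n < - N2 -> GM n = 0.
  by move=> n hn; rewrite /GM /truncseq suppG //; case: ifP.
have hKGM : forall n : int, (KG < `|n|)%N -> GM n = 0.
  by move=> n hn; rewrite /GM /truncseq hKG //; case: ifP.
have hGM1 : forall n, `|GM n| < 1.
  by move=> n; rewrite /GM /truncseq; case: ifP => _; rewrite ?normr0 ?ltr01 ?hG1.
have Hlow : forall n, n <= N1 -> H n = F n.
  by move=> n hn; rewrite /H /shiftseq GMz ?addr0 //; lia.
have Hhigh : forall n, N1 < n -> H n = shiftseq GM N n.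
  by move=> n hn; rewrite /H suppF // add0r.
have hH1 : forall n, `|H n| < 1.
  move=> n; case: (lerP n N1) => hn; first by rewrite Hlow //; apply: hF1.
  by rewrite Hhigh //; apply: hGM1.
have [K eK] : exists K : nat, K = (KF + KG + absz N + absz N1 + 1)%N by eexists.
have hKH : forall n : int, (K < `|n|)%N -> H n = 0.
  move=> n hn; rewrite /H /shiftseq hKF ?hKGM ?add0r //; lia.
have decomp : forall z, z != 0 ->
    Xfin H z = Dm (z ^ N) * Xfin GM z * Dm (z ^ (- N)) * Xfin F z.
  move=> z z0.
  have [m hm] : exists m : nat, m%:Z = N1 + 1 + K%:Z.
    by exists (absz (N1 + 1 + K%:Z)%R); rewrite gez0_abs //; lia.
  have [nn hnn] : exists nn : nat, nn%:Z = K%:Z - N1.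
    by exists (absz (K%:Z - N1)%R); rewrite gez0_abs //; lia.
  have e2 : (2 * K).+1 = (m + nn)%N by lia.
  rewrite (@Xfin_cover _ H K (- K%:Z) (2 * K).+1 z hKH); [|lia|lia].
  rewrite (@Xfin_cover _ F KF (- K%:Z) (2 * K).+1 z hKF); [|lia|lia].
  rewrite (@Xfin_cover _ GM KG (- K%:Z - N) (2 * K).+1 z hKGM); [|lia|lia].
  rewrite -transfer_shift //.
  rewrite e2 !transfer_split.
  rewrite (@transfer_id _ F (- K%:Z + m%:Z) nn z); last first.
    by move=> k hk; apply: suppF; lia.
  rewrite (@transfer_id _ (shiftseq GM N) (- K%:Z) m z); last first.
    by move=> k hk; rewrite /shiftseq GMz //; lia.
  rewrite mul1r mulr1.
  congr (_ * _); apply: transfer_ext => k hk.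
    by rewrite Hhigh //; lia.
  by rewrite Hlow //; lia.
have hNN : forall z : R[i], z != 0 -> z ^ N * z ^ (- N) = 1.
  by move=> z z0; rewrite -expfzDr // subrr expr0z.
have P1 : forall z : R[i], z != 0 ->
     fstar (nlft_a H) z
     = fstar (nlft_a F) z * fstar (nlft_a GM) z
       + z ^ N * fstar (nlft_b F) z * nlft_b GM z.
  move=> z z0.
  have [sF1 sF2] := Xfin_star hF1 z.
  have [sG1 sG2] := Xfin_star hGM1 z.
  have [sH1 sH2] := Xfin_star hH1 z.
  rewrite -sH1 -sF1 -sG1 -sF2 /nlft_b decomp //.
  move: (Xfin GM z) (Xfin F z) => Y X.
  rewrite mul22 Dconj !mxE !eqxx ?o01 ?o10 /=.
  rewrite [z ^ N * Y 1 1 * _]mulrAC hNN // mul1r !mulr1.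
  ring.
have P2 : forall z : R[i], z != 0 ->
     nlft_b H z = z ^ N * nlft_b GM z * nlft_a F z + nlft_b F z * fstar (nlft_a GM) z.
  move=> z z0.
  have [sG1 sG2] := Xfin_star hGM1 z.
  rewrite -sG1 /nlft_b /nlft_a decomp //.
  move: (Xfin GM z) (Xfin F z) => Y X.
  rewrite mul22 Dconj !mxE !eqxx ?o01 ?o10 /=.
  rewrite [z ^ N * Y 1 1 * _]mulrAC hNN // mul1r !mulr1.
  ring.
split => //; split => //.
move=> z hz.
have z0 : z != 0 by rewrite -normr_gt0 hz ltr01.
have ezz : (z^*)^-1 = z.
  have : z * z^* = 1 by rewrite -normCK hz expr1n.
  move=> h; have -> : z^* = z^-1 by apply: (mulfI z0); rewrite h mulfV.
  by rewrite invrK.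
have fT : forall f : R[i] -> R[i], fstar f z = (f z)^*.
  by move=> f; rewrite /fstar ezz.
have hw : `|z ^ N| = 1.
  by case: (N) => k /=; rewrite ?normfV normrX hz expr1n ?invr1.
have dF : nlft_a F z * (nlft_a F z)^* = 1 + nlft_b F z * (nlft_b F z)^*.
  have := Xfin_det hF1 z0; rewrite /d22.
  have [sF1 sF2] := Xfin_star hF1 z.
  rewrite sF1 sF2 !fT /nlft_a /nlft_b => h.
  by rewrite -h; ring.
have dG : nlft_a GM z * (nlft_a GM z)^* = 1 + nlft_b GM z * (nlft_b GM z)^*.
  have := Xfin_det hGM1 z0; rewrite /d22.
  have [sF1 sF2] := Xfin_star hGM1 z.
  rewrite sF1 sF2 !fT /nlft_a /nlft_b => h.
  by rewrite -h; ring.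
rewrite /nlft_r P2 // P1 // !fT.
exact: key.
Qed.
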